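(* Every cutting sequence of a linear trajectory on $S_E$ is infinitely derivable.
   Context: Let $E$ be the regular hexagon of side length $1$, centred at the origin, with two horizontal sides. Its sides are labelled as follows: the two horizontal sides are labelled $A$, the upper-right and lower-left sides are labelled $B$, and the lower-right and upper-left sides are labelled $C$. Gluing opposite parallel sides by translations gives $S_E$ (a flat torus with two marked points, the classes of the vertices). A linear trajectory is a bi-infinite straight line on $S_E$ avoiding the marked points. Its cutting sequence $c(\tau)\in\{A,B,C\}^{\mathbb Z}$ lists, up to shift, the labels of the sides successively crossed. For an ordered triple $(x,y,z)$ of the three distinct letters $A,B,C$, the associated diagram is the directed graph on $\{A,B,C\}$ with exactly the arrows $x\to y$, $y\to x$, $y\to z$, $z\to y$, $z\to z$. The six transition diagrams are those of the following triples: - $\mathscr D_0$: $(A,C,B)$; - $\mathscr D_1$: $(C,A,B)$; - $\mathscr D_2$: $(C,B,A)$; - $\mathscr D_3$: $(B,C,A)$; - $\mathscr D_4$: $(B,A,C)$; - $\mathscr D_5$: $(A,B,C)$. A word $w\in\{A,B,C\}^{\mathbb Z}$ is admissible if, for some $k$, every pair of consecutive letters $w_n\to w_{n+1}$ is an arrow of $\mathscr D_k$. In $w=(w_n)$, the letter $w_n$ is sandwiched if $w_{n-1}=w_{n+1}$. The derived sequence $w'$ of an admissible word $w$ keeps, in order, exactly the sandwiched letters of $w$. The word $w$ is derivable if it is admissible and $w'$ is admissible. The iterated derived sequences are defined by $w^{(0)}=w$ and $w^{(n+1)}=(w^{(n)})'$. The word $w$ is infinitely derivable if $w^{(n)}$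 is derivable for every $n\ge0$. *)

(* Defs.v *)
From Stdlib Require Import Reals ZArith.
Open Scope R_scope.

Inductive letter : Type := A | B | C.

Definition triple_arrow (x y z : letter) (a b : letter) : Prop :=
  (a = x /\ b = y) \/ (a = y /\ b = x) \/ (a = y /\ b = z) \/
  (a = z /\ b = y) \/ (a = z /\ b = z).

Definition diagram_triple (k : nat) : letter * letter * letter :=
  match k with
  | 0 => (A, C, B)
  | 1 => (C, A, B)
  | 2 => (C, B, A)
  | 3 => (B, C, A)
  | 4 => (B, A, C)
  | _ => (A, B, C)
  end.

Definition diagram_arrow (k : nat) (a b : letter) : Prop :=
  let '(x, y, z) := diagram_triple k in triple_arrow x y z a b.

Definition word := Z -> letter.

Definition admissible (w : word) : Prop :=
  exists k : nat, (k <= 5)%nat /\ forall n : Z, diagram_arrow k (w n) (w (n + 1)%Z).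

Definition sandwiched (w : word) (n : Z) : Prop := w (n - 1)%Z = w (n + 1)%Z.

(* w' is (a shift of) the derived sequence of w: it lists, in order, exactly
   the sandwiched letters of w, as a bi-infinite word. *)
Definition derived (w w' : word) : Prop :=
  exists sigma : Z -> Z,
    (forall n, (sigma n < sigma (n + 1))%Z) /\
    (forall n, sandwiched w (sigma n)) /\
    (forall m, sandwiched w m -> exists n, sigma n = m) /\
    (forall n, w' n = w (sigma n)).

Definition derivable (w : word) : Prop :=
  admissible w /\ exists w', derived w w' /\ admissible w'.

Inductive iter_derived : nat -> word -> word -> Prop :=
  | iter_derived_0 : forall w, iter_derived 0 w w
  | iter_derived_S : forall n w v u,
      iter_derived n w v -> derived v u -> iter_derived (S n) w u.

Definition infinitely_derivable (w : word) : Prop :=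
  forall n v, iter_derived n w v -> derivable v.

(** * Geometry: the hexagonal tiling of the plane (universal cover of S_E) *)
Definition pt := (R * R)%type.
Definition padd (p q : pt) : pt := (fst p + fst q, snd p + snd q).
Definition psub (p q : pt) : pt := (fst p - fst q, snd p - snd q).
Definition pscale (s : R) (p : pt) : pt := (s * fst p, s * snd p).

Definition hgt : R := sqrt 3 / 2.

Definition V0 : pt := (1, 0).
Definition V1 : pt := (1/2, hgt).
Definition V2 : pt := (-1/2, hgt).
Definition V3 : pt := (-1, 0).
Definition V4 : pt := (-1/2, - hgt).
Definition V5 : pt := (1/2, - hgt).

Definition side (L : letter) (P Q : pt) : Prop :=
  (L = A /\ P = V1 /\ Q = V2) \/ (L = A /\ P = V4 /\ Q = V5) \/
  (L = B /\ P = V0 /\ Q = V1) \/ (L = B /\ P = V3 /\ Q = V4) \/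
  (L = C /\ P = V5 /\ Q = V0) \/ (L = C /\ P = V2 /\ Q = V3).

Definition is_vertex_of_E (P : pt) : Prop :=
  P = V0 \/ P = V1 \/ P = V2 \/ P = V3 \/ P = V4 \/ P = V5.

(* the translation lattice: gluing opposite sides of E; its translates of E
   tile the plane and S_E = R^2 / Lambda *)
Definition lattice_vec (m n : Z) : pt :=
  (3/2 * IZR m, hgt * IZR m + sqrt 3 * IZR n).

(* q is a vertex of the tiling (lift of a marked point of S_E) *)
Definition tiling_vertex (q : pt) : Prop :=
  exists m n P, is_vertex_of_E P /\ q = padd (lattice_vec m n) P.

Definition on_edge (L : letter) (q : pt) : Prop :=
  exists m n P Q s, side L P Q /\ 0 < s < 1 /\
    q = padd (lattice_vec m n) (padd P (pscale s (psub Q P))).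

(** Linear trajectories, lifted to straight lines t |-> p + t v in R^2 *)
Definition traj (p v : pt) (t : R) : pt := padd p (pscale t v).

Definition linear_trajectory (p v : pt) : Prop :=
  v <> (0, 0) /\ forall t, ~ tiling_vertex (traj p v t).

(* w is (a shift of) the cutting sequence: the crossing times with edges are
   enumerated increasingly by tau, and w n is the label of the n-th edge. *)
Definition cutting_sequence (p v : pt) (w : word) : Prop :=
  exists tau : Z -> R,
    (forall n, tau n < tau (n + 1)%Z) /\
    (forall n, on_edge (w n) (traj p v (tau n))) /\
    (forall t L, on_edge L (traj p v t) -> exists n, tau n = t).

(* Main.v *)
Require Import Defs.
From Stdlib Require Import Reals ZArith.
From Stdlib Require Import Lra Lia List IndefiniteDescription.
Open Scope R_scope.

Inductive pos := P1 | P2 | P3.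

Definition clause (a g : R) (p : pos) (y y' : R) : Prop :=
  match p with
  | P1 => 0 < y < a /\ y' = y + a + 2*g
  | P2 => a < y < 2*a+g /\ y' = y + g - a
  | P3 => 2*a+g < y < 2*a+2*g /\ y' = y - 2*a - g
  end.

Lemma clause_cases a g p y y' : clause a g p y y' ->
  (p = P1 /\ 0 < y < a /\ y' = y + a + 2*g) \/
  (p = P2 /\ a < y < 2*a+g /\ y' = y + g - a) \/
  (p = P3 /\ 2*a+g < y < 2*a+2*g /\ y' = y - 2*a - g).
Proof. destruct p; simpl; tauto. Qed.

Definition code a g (z : Z -> pos) (x : Z -> R) :=
  0 <= a /\ 0 <= g /\ forall n, clause a g (z n) (x n) (x (n+1)%Z).

Definition sandw (z : Z -> pos) (m : Z) := z (m-1)%Z = z (m+1)%Z.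

Definition first_after z n j := sandw z (n+j)%Z /\ forall i, (0 < i < j)%Z -> ~ sandw z (n+i)%Z.

Ltac cl Hc k :=
  let E := fresh "E" in let H1 := fresh "H" in let H2 := fresh "H" in
  let H3 := fresh "H" in
  destruct (clause_cases _ _ _ _ _ (Hc k)) as [[E [[H1 H2] H3]]|[[E [[H1 H2] H3]]|[E [[H1 H2] H3]]]];
  simpl in H3; try (exfalso; lra); try (exfalso; congruence).

Lemma fa1 z : sandw z 1 -> first_after z 0 1.
Proof. intros H; split; [exact H| intros i Hi; lia]. Qed.
Lemma fa2 z : sandw z 2 -> ~ sandw z 1 -> first_after z 0 2.
Proof. intros H H1; split; [exact H| intros i Hi; assert (i = 1)%Z by lia; subst; exact H1]. Qed.
Lemma fa3 z : sandw z 3 -> ~ sandw z 1 -> ~ sandw z 2 -> first_after z 0 3.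
Proof. intros H H1 H2; split; [exact H| intros i Hi; assert (i = 1 \/ i = 2)%Z as [->| ->] by lia; assumption]. Qed.
Lemma fa4 z : sandw z 4 -> ~ sandw z 1 -> ~ sandw z 2 -> ~ sandw z 3 -> first_after z 0 4.
Proof. intros H H1 H2 H3; split; [exact H| intros i Hi; assert (i = 1 \/ i = 2 \/ i = 3)%Z as [->|[->| ->]] by lia; assumption]. Qed.
Lemma fa5 z : sandw z 5 -> ~ sandw z 1 -> ~ sandw z 2 -> ~ sandw z 3 -> ~ sandw z 4 -> first_after z 0 5.
Proof. intros H H1 H2 H3 H4; split; [exact H| intros i Hi; assert (i = 1 \/ i = 2 \/ i = 3 \/ i = 4)%Z as [->|[->|[->| ->]]] by lia; assumption]. Qed.

Ltac zrw := repeat match goal with E : ?z ?k = _ |- context [?z ?k] => rewrite E end.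
Ltac sw := unfold sandw; simpl; zrw; first [reflexivity | discriminate].
Ltac fin_clause := zrw; simpl; repeat split; lra.
Ltac try_j :=
  first
  [ exists 1%Z; split; [apply fa1; sw | split; [lia | fin_clause]]
  | exists 2%Z; split; [apply fa2; sw | split; [lia | fin_clause]]
  | exists 3%Z; split; [apply fa3; sw | split; [lia | fin_clause]]
  | exists 4%Z; split; [apply fa4; sw | split; [lia | fin_clause]]
  | exists 5%Z; split; [apply fa5; sw | split; [lia | fin_clause]] ].

Definition perm1 p := match p with P1 => P1 | P2 => P3 | P3 => P2 end.
Definition off1 a g p := match p with P1 => 0 | P2 => 4*a-g | P3 => 2*a+g end.

Lemma itin1 a g z x : code a g z x -> 3*a <= g -> sandw z 0 ->
  exists j, first_after z 0 j /\ (1 <= j <= 5)%Z /\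
   clause a (g - 3*a) (perm1 (z 0%Z)) (x 0%Z - off1 a g (z 0%Z)) (x j - off1 a g (z j)).
Proof.
  intros [Ha [Hg Hc]] Hr Hs. unfold sandw in Hs; simpl in Hs.
  cl Hc (-1)%Z; cl Hc 0%Z; cl Hc 1%Z; cl Hc 2%Z; cl Hc 3%Z; cl Hc 4%Z; cl Hc 5%Z; cl Hc 6%Z;
  try_j.
Qed.

Definition perm2 p := match p with P1 => P2 | P2 => P1 | P3 => P3 end.
Definition off2 a g p := match p with P1 => g-3*a | P2 => g | P3 => 2*g-a end.
Lemma itin2 a g z x : code a g z x -> 2*a <= g <= 3*a -> sandw z 0 ->
  exists j, first_after z 0 j /\ (1 <= j <= 5)%Z /\
   clause (3*a-g) (g - 2*a) (perm2 (z 0%Z)) (x 0%Z - off2 a g (z 0%Z)) (x j - off2 a g (z j)).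
Proof.
  intros [Ha [Hg Hc]] Hr Hs. unfold sandw in Hs; simpl in Hs.
  cl Hc (-1)%Z; cl Hc 0%Z; cl Hc 1%Z; cl Hc 2%Z; cl Hc 3%Z; cl Hc 4%Z; cl Hc 5%Z; cl Hc 6%Z;
  try_j.
Qed.

Definition perm3 p := match p with P1 => P3 | P2 => P2 | P3 => P1 end.
Definition off3 a g p := match p with P1 => 2*g-5*a | P2 => 2*g-2*a | P3 => a+2*g end.
Lemma itin3 a g z x : code a g z x -> a <= g <= 2*a -> sandw z 0 ->
  exists j, first_after z 0 j /\ (1 <= j <= 5)%Z /\
   clause (2*a-g) a (perm3 (z 0%Z)) (x 0%Z - off3 a g (z 0%Z)) (x j - off3 a g (z j)).
Proof.
  intros [Ha [Hg Hc]] Hr Hs. unfold sandw in Hs; simpl in Hs.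
  cl Hc (-1)%Z; cl Hc 0%Z; cl Hc 1%Z; cl Hc 2%Z; cl Hc 3%Z; cl Hc 4%Z; cl Hc 5%Z; cl Hc 6%Z;
  try_j.
Qed.

Lemma gap a g z x : code a g z x -> a <= g ->
  exists j, (0 <= j <= 4)%Z /\ sandw z j.
Proof.
  intros [Ha [Hg Hc]] Hr.
  cl Hc (-1)%Z; cl Hc 0%Z; cl Hc 1%Z; cl Hc 2%Z; cl Hc 3%Z; cl Hc 4%Z; cl Hc 5%Z;
  first [ exists 0%Z; split; [lia|sw] | exists 1%Z; split; [lia|sw] | exists 2%Z; split; [lia|sw]
        | exists 3%Z; split; [lia|sw] | exists 4%Z; split; [lia|sw] ].
Qed.

Lemma trans a g z x : code a g z x -> a <= g -> forall n,
  (z n = P1 /\ z (n+1)%Z = P3) \/ (z n = P2 /\ z (n+1)%Z = P2) \/ (z n = P2 /\ z (n+1)%Z = P3)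
  \/ (z n = P3 /\ z (n+1)%Z = P1) \/ (z n = P3 /\ z (n+1)%Z = P2).
Proof.
  intros [Ha [Hg Hc]] Hr n.
  destruct (clause_cases _ _ _ _ _ (Hc n)) as [[E [[H1 H2] H3]]|[[E [[H1 H2] H3]]|[E [[H1 H2] H3]]]];
  destruct (clause_cases _ _ _ _ _ (Hc (n+1)%Z)) as [[E' [[H1' H2'] H3']]|[[E' [[H1' H2'] H3']]|[E' [[H1' H2'] H3']]]];
  try (exfalso; lra); tauto.
Qed.

Lemma code_shift a g z x n : code a g z x -> code a g (fun m => z (n+m)%Z) (fun m => x (n+m)%Z).
Proof.
  intros [Ha [Hg Hc]]; split; [|split]; auto. intros m. rewrite Z.add_assoc. apply Hc.
Qed.

Definition swap13 p := match p with P1 => P3 | P2 => P2 | P3 => P1 end.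

Lemma code_swap a g z x : code a g z x ->
  code g a (fun n => swap13 (z n)) (fun n => 2*a+2*g - x n).
Proof.
  intros [Ha [Hg Hc]]; split; [|split]; auto. intros m.
  specialize (Hc m). destruct (z m); simpl in *; lra.
Qed.

Definition Kw (w : word) : Prop := exists (f : pos -> letter) a g z x,
  (forall p q, f p = f q -> p = q) /\ code a g z x /\ forall n, w n = f (z n).

Lemma Kw_norm w : Kw w -> exists (f : pos -> letter) a g z x,
  (forall p q, f p = f q -> p = q) /\ code a g z x /\ a <= g /\ forall n, w n = f (z n).
Proof.
  intros (f & a & g & z & x & Hf & Hc & Hw).
  destruct (Rle_dec a g).
  - exists f, a, g, z, x; split; [auto|split; [auto|split; auto]].
  - exists (fun p => f (swap13 p)), g, a, (fun n => swap13 (z n)), (fun n => 2*a+2*g - x n).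
    split; [|split; [apply code_swap; auto|split; [lra|]]].
    + intros p q H; apply Hf in H; destruct p, q; simpl in H; congruence.
    + intros m; rewrite Hw; destruct (z m); reflexivity.
Qed.

Lemma triple_exists (x y z : letter) : x <> y -> y <> z -> x <> z ->
  exists k, (k <= 5)%nat /\ diagram_triple k = (x, y, z).
Proof.
  intros; destruct x, y, z; try congruence;
  first [ exists 0%nat; split; [lia|reflexivity] | exists 1%nat; split; [lia|reflexivity]
        | exists 2%nat; split; [lia|reflexivity] | exists 3%nat; split; [lia|reflexivity]
        | exists 4%nat; split; [lia|reflexivity] | exists 5%nat; split; [lia|reflexivity] ].
Qed.

Lemma Kw_admissible w : Kw w -> admissible w.
Proof.
  intros HK; destruct (Kw_norm w HK) as (f & a & g & z & x & Hf & Hc & Hag & Hw).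
  assert (D12: f P1 <> f P3) by (intro H; apply Hf in H; discriminate).
  assert (D23: f P3 <> f P2) by (intro H; apply Hf in H; discriminate).
  assert (D13: f P1 <> f P2) by (intro H; apply Hf in H; discriminate).
  destruct (triple_exists _ _ _ D12 D23 D13) as [k [Hk Ht]].
  exists k; split; auto. intros n. unfold diagram_arrow. rewrite Ht. unfold triple_arrow.
  rewrite !Hw.
  destruct (trans a g z x Hc Hag n) as [[-> ->]|[[-> ->]|[[-> ->]|[[-> ->]|[-> ->]]]]]; tauto.
Qed.

Lemma sandw_iff w f z m : (forall p q, f p = f q -> p = q) -> (forall n, w n = f (z n)) ->
  (sandwiched w m <-> sandw z m).
Proof.
  intros Hf Hw; unfold sandwiched, sandw; rewrite !Hw; split; [apply Hf| intros ->; auto].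
Qed.

Definition nextf (S : Z -> Prop) (dec : forall m, {S m} + {~ S m}) (m : Z) : Z :=
  if dec (m+1)%Z then (m+1)%Z else if dec (m+2)%Z then (m+2)%Z else
  if dec (m+3)%Z then (m+3)%Z else if dec (m+4)%Z then (m+4)%Z else (m+5)%Z.
Definition prevf (S : Z -> Prop) (dec : forall m, {S m} + {~ S m}) (m : Z) : Z :=
  if dec (m-1)%Z then (m-1)%Z else if dec (m-2)%Z then (m-2)%Z else
  if dec (m-3)%Z then (m-3)%Z else if dec (m-4)%Z then (m-4)%Z else (m-5)%Z.

Lemma gap_cases (S : Z -> Prop) n : (exists j, (0 <= j <= 4)%Z /\ S (n + j)%Z) ->
  S n \/ S (n+1)%Z \/ S (n+2)%Z \/ S (n+3)%Z \/ S (n+4)%Z.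
Proof.
  intros [j [Hj HS]].
  assert (j = 0 \/ j = 1 \/ j = 2 \/ j = 3 \/ j = 4)%Z as [->|[->|[->|[->| ->]]]] by lia;
  [left; rewrite Z.add_0_r in HS | right;left | do 2 right; left | do 3 right; left | do 4 right]; auto.
Qed.

Lemma nextf_spec S dec (gapS : forall n, exists j, (0 <= j <= 4)%Z /\ S (n + j)%Z) m :
  (m < nextf S dec m)%Z /\ S (nextf S dec m) /\ forall k, (m < k < nextf S dec m)%Z -> ~ S k.
Proof.
  pose proof (gap_cases S (m+1) (gapS (m+1)%Z)) as G.
  replace (m+1+1)%Z with (m+2)%Z in G by lia. replace (m+1+2)%Z with (m+3)%Z in G by lia.
  replace (m+1+3)%Z with (m+4)%Z in G by lia. replace (m+1+4)%Z with (m+5)%Z in G by lia.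
  unfold nextf.
  destruct (dec (m+1)%Z); [split; [lia|split; [auto|intros; lia]]|].
  destruct (dec (m+2)%Z); [split; [lia|split; [auto|]]; intros k Hk;
    assert (k = m+1)%Z by lia; subst; auto|].
  destruct (dec (m+3)%Z); [split; [lia|split; [auto|]]; intros k Hk;
    assert (k = m+1 \/ k = m+2)%Z as [->| ->] by lia; auto|].
  destruct (dec (m+4)%Z); [split; [lia|split; [auto|]]; intros k Hk;
    assert (k = m+1 \/ k = m+2 \/ k = m+3)%Z as [->|[->| ->]] by lia; auto|].
  split; [lia|split; [tauto|]]; intros k Hk;
    assert (k = m+1 \/ k = m+2 \/ k = m+3 \/ k = m+4)%Z as [->|[->|[->| ->]]] by lia; auto.
Qed.

Lemma prevf_spec S dec (gapS : forall n, exists j, (0 <= j <= 4)%Z /\ S (n + j)%Z) m :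
  (prevf S dec m < m)%Z /\ S (prevf S dec m) /\ forall k, (prevf S dec m < k < m)%Z -> ~ S k.
Proof.
  pose proof (gap_cases S (m-5) (gapS (m-5)%Z)) as G.
  replace (m-5+1)%Z with (m-4)%Z in G by lia. replace (m-5+2)%Z with (m-3)%Z in G by lia.
  replace (m-5+3)%Z with (m-2)%Z in G by lia. replace (m-5+4)%Z with (m-1)%Z in G by lia.
  unfold prevf.
  destruct (dec (m-1)%Z); [split; [lia|split; [auto|intros; lia]]|].
  destruct (dec (m-2)%Z); [split; [lia|split; [auto|]]; intros k Hk;
    assert (k = m-1)%Z by lia; subst; auto|].
  destruct (dec (m-3)%Z); [split; [lia|split; [auto|]]; intros k Hk;
    assert (k = m-1 \/ k = m-2)%Z as [->| ->] by lia; auto|].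
  destruct (dec (m-4)%Z); [split; [lia|split; [auto|]]; intros k Hk;
    assert (k = m-1 \/ k = m-2 \/ k = m-3)%Z as [->|[->| ->]] by lia; auto|].
  split; [lia|split; [tauto|]]; intros k Hk;
    assert (k = m-1 \/ k = m-2 \/ k = m-3 \/ k = m-4)%Z as [->|[->|[->| ->]]] by lia; auto.
Qed.

Lemma next_prev S dec (gapS : forall n, exists j, (0 <= j <= 4)%Z /\ S (n + j)%Z) m :
  S m -> nextf S dec (prevf S dec m) = m.
Proof.
  intros Hm.
  destruct (prevf_spec S dec gapS m) as [P1' [P2' P3']].
  destruct (nextf_spec S dec gapS (prevf S dec m)) as [N1 [N2 N3]].
  destruct (Z.lt_trichotomy (nextf S dec (prevf S dec m)) m) as [H|[H|H]]; auto.
  - exfalso; apply (P3' _ (conj N1 H)); auto.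
  - exfalso; apply (N3 m (conj P1' H)); auto.
Qed.

Lemma enum_exists S (dec : forall m, {S m} + {~ S m})
  (gapS : forall n, exists j, (0 <= j <= 4)%Z /\ S (n + j)%Z) :
  exists sigma : Z -> Z, (forall n, (sigma n < sigma (n+1))%Z) /\ (forall n, S (sigma n)) /\
    (forall m, S m -> exists n, sigma n = m).
Proof.
  set (s0 := nextf S dec (-1)%Z).
  set (sig := fun k : Z => if (0 <=? k)%Z then Nat.iter (Z.to_nat k) (nextf S dec) s0
                           else Nat.iter (Z.to_nat (- k)) (prevf S dec) s0).
  assert (HS0 : S s0) by (apply nextf_spec; auto).
  assert (Hpos : forall n : nat, S (Nat.iter n (nextf S dec) s0)).
  { induction n; simpl; auto. apply nextf_spec; auto. }
  assert (Hneg : forall n : nat, S (Nat.iter n (prevf S dec) s0)).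
  { induction n; simpl; auto. apply prevf_spec; auto. }
  assert (HSk : forall k, S (sig k)).
  { intros k; unfold sig; destruct (0 <=? k)%Z; auto. }
  assert (Hstep : forall k, sig (k+1)%Z = nextf S dec (sig k)).
  { intros k; unfold sig.
    destruct (Z_le_gt_dec 0 k).
    - rewrite (proj2 (Z.leb_le 0 k) l). rewrite (proj2 (Z.leb_le 0 (k+1)) ltac:(lia)).
      rewrite Z2Nat.inj_add by lia. rewrite Nat.add_1_r. reflexivity.
    - rewrite (proj2 (Z.leb_gt 0 k) ltac:(lia)).
      destruct (Z.eq_dec k (-1)) as [->|Hk].
      + simpl. rewrite next_prev; auto.
      + rewrite (proj2 (Z.leb_gt 0 (k+1)) ltac:(lia)).
        replace (Z.to_nat (- k)) with (Datatypes.S (Z.to_nat (- (k+1)))) by lia.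
        simpl. rewrite next_prev; auto. }
  exists sig. split; [|split; auto].
  - intros k; rewrite Hstep; apply (nextf_spec S dec gapS).
  - assert (Hlt : forall k, (sig k < sig (k+1))%Z) by (intros k; rewrite Hstep; apply (nextf_spec S dec gapS)).
    assert (Hup : forall N : nat, exists k, (sig k <= s0 + Z.of_nat N < sig (k+1))%Z).
    { induction N as [|N [k Hk]].
      - exists 0%Z. assert (sig 0%Z = s0) by reflexivity. specialize (Hlt 0%Z). simpl in *. lia.
      - destruct (Z_lt_le_dec (s0 + Z.of_nat (Datatypes.S N)) (sig (k+1)%Z)).
        + exists k; lia.
        + exists (k+1)%Z. specialize (Hlt (k+1)%Z). lia. }
    assert (Hdown : forall N : nat, exists k, (sig k <= s0 - Z.of_nat N < sig (k+1))%Z).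
    { induction N as [|N [k Hk]].
      - exists 0%Z. assert (sig 0%Z = s0) by reflexivity. specialize (Hlt 0%Z). simpl in *. lia.
      - destruct (Z_le_gt_dec (sig k) (s0 - Z.of_nat (Datatypes.S N))).
        + exists k; lia.
        + exists (k-1)%Z. specialize (Hlt (k-1)%Z). replace (k-1+1)%Z with k in * by lia. lia. }
    intros m Hm.
    assert (Hk : exists k, (sig k <= m < sig (k+1))%Z).
    { destruct (Z_le_gt_dec s0 m).
      - destruct (Hup (Z.to_nat (m - s0))) as [k Hk]. exists k. rewrite Z2Nat.id in Hk by lia.
        replace (s0 + (m - s0))%Z with m in Hk by lia. auto.
      - destruct (Hdown (Z.to_nat (s0 - m))) as [k Hk]. exists k. rewrite Z2Nat.id in Hk by lia.
        replace (s0 - (s0 - m))%Z with m in Hk by lia. auto. }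
    destruct Hk as [k Hk]. exists k.
    destruct (Z.eq_dec (sig k) m); auto. exfalso.
    rewrite Hstep in Hk. apply (proj2 (proj2 (nextf_spec S dec gapS (sig k))) m); auto; lia.
Qed.

Lemma sigma_mono (sigma : Z -> Z) : (forall n, (sigma n < sigma (n+1))%Z) ->
  forall a b, (a < b)%Z -> (sigma a < sigma b)%Z.
Proof.
  intros H a b Hab.
  assert (forall d : nat, (sigma a < sigma (a + Z.of_nat (Datatypes.S d)))%Z).
  { induction d.
    - simpl. replace (a + 1)%Z with (a+1)%Z by lia. apply H.
    - rewrite Nat2Z.inj_succ. replace (a + Z.succ (Z.of_nat (Datatypes.S d)))%Z
        with ((a + Z.of_nat (Datatypes.S d)) + 1)%Z by lia. specialize (H (a + Z.of_nat (Datatypes.S d))%Z). lia. }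
  specialize (H0 (Z.to_nat (b - a - 1))).
  replace (a + Z.of_nat (Datatypes.S (Z.to_nat (b - a - 1))))%Z with b in H0 by lia. auto.
Qed.

Lemma fa_shift z n j : first_after (fun m => z (n+m)%Z) 0 j -> first_after z n j.
Proof.
  unfold first_after, sandw. intros [H1 H2]. split.
  - replace (n + j - 1)%Z with (n + (0 + j - 1))%Z by lia.
    replace (n + j + 1)%Z with (n + (0 + j + 1))%Z by lia. exact H1.
  - intros i Hi Hc. apply (H2 i Hi).
    replace (n + (0 + i - 1))%Z with (n + i - 1)%Z by lia.
    replace (n + (0 + i + 1))%Z with (n + i + 1)%Z by lia. exact Hc.
Qed.

Lemma sandw_shift z n : sandw z n -> sandw (fun m => z (n+m)%Z) 0.
Proof.
  unfold sandw. intros H. replace (n + (0 - 1))%Z with (n-1)%Z by lia.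
  replace (n + (0 + 1))%Z with (n+1)%Z by lia. exact H.
Qed.

Lemma closure_generic a g a' g' (perm : pos -> pos) (off : pos -> R)
  (Hinv : forall p, perm (perm p) = p) (Ha' : 0 <= a') (Hg' : 0 <= g')
  (Hit : forall z x, code a g z x -> sandw z 0 -> exists j, first_after z 0 j /\ (1 <= j <= 5)%Z /\
      clause a' g' (perm (z 0%Z)) (x 0%Z - off (z 0%Z)) (x j - off (z j)))
  (f : pos -> letter) z x (Hf : forall p q, f p = f q -> p = q) (Hc : code a g z x)
  (v u : word) (Hv : forall n, v n = f (z n)) : derived v u -> Kw u.
Proof.
  intros (sigma & Hmono & Hsw & Hsurj & Hu).
  assert (Hsw' : forall k, sandw z (sigma k)) by (intros k; apply (sandw_iff v f z); auto).
  assert (Hsurj' : forall m, sandw z m -> exists t, sigma t = m)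
    by (intros m Hm; apply Hsurj; apply (sandw_iff v f z); auto).
  assert (Hnext : forall k n j, sigma k = n -> first_after z n j -> (1 <= j)%Z -> sigma (k+1)%Z = (n + j)%Z).
  { intros k n j Hk [Hs Hno] Hj.
    destruct (Hsurj' _ Hs) as [t Ht].
    assert (Htk : (k < t)%Z).
    { destruct (Z_lt_le_dec k t); auto. exfalso.
      destruct (Z.eq_dec t k); [subst; lia|].
      pose proof (sigma_mono sigma Hmono t k ltac:(lia)). lia. }
    assert (Hle : (sigma (k+1) <= sigma t)%Z).
    { destruct (Z.eq_dec (k+1) t); [subst; lia|]. pose proof (sigma_mono sigma Hmono (k+1) t ltac:(lia)). lia. }
    pose proof (Hmono k).
    destruct (Z.eq_dec (sigma (k+1)%Z) (n+j)%Z); auto. exfalso.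
    apply (Hno (sigma (k+1) - n)%Z); [lia|]. replace (n + (sigma (k+1) - n))%Z with (sigma (k+1)%Z) by lia.
    apply Hsw'. }
  exists (fun p => f (perm p)), a', g', (fun k => perm (z (sigma k))),
    (fun k => x (sigma k) - off (z (sigma k))).
  split; [|split].
  - intros p q H. apply Hf in H. rewrite <- (Hinv p), <- (Hinv q), H. reflexivity.
  - split; [auto|split; [auto|]]. intros k.
    destruct (Hit (fun m => z (sigma k + m)%Z) (fun m => x (sigma k + m)%Z) (code_shift a g z x (sigma k) Hc)
      (sandw_shift z _ (Hsw' k))) as [j [Hfa [Hj Hcl]]].
    apply fa_shift in Hfa. rewrite (Hnext k (sigma k) j eq_refl Hfa ltac:(lia)).
    rewrite !Z.add_0_r in Hcl. exact Hcl.
  - intros k. rewrite Hu, Hv, Hinv. reflexivity.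
Qed.

Lemma derived_closure v u : Kw v -> derived v u -> Kw u.
Proof.
  intros HK Hd. destruct (Kw_norm v HK) as (f & a & g & z & x & Hf & Hc & Hag & Hw).
  assert (Ha : 0 <= a) by apply Hc.
  destruct (Rle_dec (3*a) g).
  - apply (closure_generic a g a (g-3*a) perm1 (off1 a g)) with f z x v; auto; try lra.
    + intros []; reflexivity.
    + intros z' x' Hc' Hs'. apply itin1; auto.
  - destruct (Rle_dec (2*a) g).
    + apply (closure_generic a g (3*a-g) (g-2*a) perm2 (off2 a g)) with f z x v; auto; try lra.
      * intros []; reflexivity.
      * intros z' x' Hc' Hs'. apply itin2; auto; lra.
    + apply (closure_generic a g (2*a-g) a perm3 (off3 a g)) with f z x v; auto; try lra.
      * intros []; reflexivity.
      * intros z' x' Hc' Hs'. apply itin3; auto; lra.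
Qed.

Lemma Kw_derivable w : Kw w -> Defs.derivable w.
Proof.
  intros HK. split; [apply Kw_admissible; auto|].
  destruct (Kw_norm w HK) as (f & a & g & z & x & Hf & Hc & Hag & Hw).
  assert (dec : forall m, {sandwiched w m} + {~ sandwiched w m}).
  { intros m. unfold sandwiched. destruct (w (m-1)%Z), (w (m+1)%Z);
    first [left; reflexivity | right; discriminate]. }
  assert (gapS : forall n, exists j, (0 <= j <= 4)%Z /\ sandwiched w (n + j)%Z).
  { intros n. destruct (gap a g _ _ (code_shift a g z x n Hc) Hag) as [j [Hj Hs]].
    exists j; split; auto. apply (sandw_iff w f z); auto. unfold sandw in *.
    replace (n + j - 1)%Z with (n + (j - 1))%Z by lia. replace (n + j + 1)%Z with (n + (j + 1))%Z by lia.
    exact Hs. }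
  destruct (enum_exists _ dec gapS) as (sigma & H1 & H2 & H3).
  set (u := fun n => w (sigma n)).
  assert (Hd : derived w u) by (exists sigma; repeat split; auto).
  exists u; split; auto. apply Kw_admissible. apply (derived_closure w); auto.
Qed.

Theorem Kw_inf w : Kw w -> infinitely_derivable w.
Proof.
  intros HK n v Hit. apply Kw_derivable.
  induction Hit; auto. apply (derived_closure v); auto.
Qed.


Lemma hgt_pos : 0 < hgt.
Proof. unfold hgt. assert (0 < sqrt 3) by (apply sqrt_lt_R0; lra). lra. Qed.
Lemma sqrt3_hgt : sqrt 3 = 2 * hgt.
Proof. unfold hgt; field. Qed.

Definition hat (q : pt) : pt := (2 * fst q, snd q / hgt).
Definition cen (m k : Z) : pt := (3 * IZR m, IZR m + 2 * IZR k).

Lemma hat_padd a b : hat (padd a b) = padd (hat a) (hat b).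
Proof. unfold hat, padd; simpl; f_equal; [field| field; pose proof hgt_pos; lra]. Qed.
Lemma hat_pscale s a : hat (pscale s a) = pscale s (hat a).
Proof. unfold hat, pscale; simpl; f_equal; [field| field; pose proof hgt_pos; lra]. Qed.
Lemma hat_psub a b : hat (psub a b) = psub (hat a) (hat b).
Proof. unfold hat, psub; simpl; f_equal; [field| field; pose proof hgt_pos; lra]. Qed.
Lemma hat_lat m k : hat (lattice_vec m k) = cen m k.
Proof. unfold hat, lattice_vec, cen; simpl; f_equal; [field|]. rewrite sqrt3_hgt. field. pose proof hgt_pos; lra. Qed.
Lemma hat_inj a b : hat a = hat b -> a = b.
Proof.
  destruct a as [a1 a2], b as [b1 b2]; unfold hat; simpl; intros H; injection H; intros H2 H1.
  pose proof hgt_pos. f_equal; [lra|].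
  apply (Rmult_eq_reg_r (/ hgt)); [exact H2| apply Rgt_not_eq, Rinv_0_lt_compat; lra].
Qed.
Lemma hgt_div : hgt / hgt = 1.
Proof. field. pose proof hgt_pos; lra. Qed.
Lemma mhgt_div : - hgt / hgt = -1.
Proof. field. pose proof hgt_pos; lra. Qed.
Lemma zero_div : 0 / hgt = 0.
Proof. field. pose proof hgt_pos; lra. Qed.

Definition hV0 : pt := (2, 0).
Definition hV1 : pt := (1, 1).
Definition hV2 : pt := (-1, 1).
Definition hV3 : pt := (-2, 0).
Definition hV4 : pt := (-1, -1).
Definition hV5 : pt := (1, -1).

Ltac hatV := unfold hat, V0, V1, V2, V3, V4, V5, hV0, hV1, hV2, hV3, hV4, hV5; simpl; rewrite ?hgt_div, ?mhgt_div, ?zero_div; f_equal; lra.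
Lemma hat_V0 : hat V0 = hV0. Proof. hatV. Qed.
Lemma hat_V1 : hat V1 = hV1. Proof. hatV. Qed.
Lemma hat_V2 : hat V2 = hV2. Proof. hatV. Qed.
Lemma hat_V3 : hat V3 = hV3. Proof. hatV. Qed.
Lemma hat_V4 : hat V4 = hV4. Proof. hatV. Qed.
Lemma hat_V5 : hat V5 = hV5. Proof. hatV. Qed.

Inductive edge := E0 | E1 | E2 | E3 | E4 | E5.

Definition onE (e : edge) (y : pt) : Prop :=
  match e with
  | E0 => fst y + snd y = 2 /\ 0 < snd y < 1
  | E1 => snd y = 1 /\ -1 < fst y < 1
  | E2 => snd y - fst y = 2 /\ 0 < snd y < 1
  | E3 => fst y + snd y = -2 /\ -1 < snd y < 0
  | E4 => snd y = -1 /\ -1 < fst y < 1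
  | E5 => fst y - snd y = 2 /\ -1 < snd y < 0
  end.
Definition Nrm (e : edge) (y : pt) : R :=
  match e with
  | E0 => fst y + snd y | E1 => snd y | E2 => snd y - fst y
  | E3 => - fst y - snd y | E4 => - snd y | E5 => fst y - snd y
  end.
Definition bnd (e : edge) : R :=
  match e with E0 | E2 | E3 | E5 => 2 | E1 | E4 => 1 end.
Definition label (e : edge) : letter :=
  match e with E0 | E3 => Defs.B | E1 | E4 => Defs.A | E2 | E5 => Defs.C end.
Definition opp (e : edge) : edge :=
  match e with E0 => E3 | E1 => E4 | E2 => E5 | E3 => E0 | E4 => E1 | E5 => E2 end.
Definition stm (e : edge) : Z :=
  match e with E0 => 1 | E1 => 0 | E2 => -1 | E3 => -1 | E4 => 0 | E5 => 1 end.
Definition stk (e : edge) : Z :=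
  match e with E0 => 0 | E1 => 1 | E2 => 1 | E3 => 0 | E4 => -1 | E5 => -1 end.

Definition inH (y : pt) : Prop := forall e, Nrm e y <= bnd e.
Definition vertexH (y : pt) : Prop :=
  y = hV0 \/ y = hV1 \/ y = hV2 \/ y = hV3 \/ y = hV4 \/ y = hV5.

Lemma all_edges e : In e (E0 :: E1 :: E2 :: E3 :: E4 :: E5 :: nil).
Proof. destruct e; simpl; tauto. Qed.

Lemma onE_tight e y : onE e y -> Nrm e y = bnd e /\ forall e', e' <> e -> Nrm e' y < bnd e'.
Proof.
  destruct y as [y1 y2]; destruct e; simpl; intros H; split; try lra;
  intros e' He; destruct e'; simpl; try lra; congruence.
Qed.

Definition edge_eq_dec (e e' : edge) : {e = e'} + {e <> e'}.
Proof. decide equality. Defined.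

Lemma onE_inH e y : onE e y -> inH y.
Proof.
  intros H e'. destruct (onE_tight e y H) as [H1 H2].
  destruct (edge_eq_dec e' e). subst; lra. apply Rlt_le, H2; auto.
Qed.

Ltac unfold_inH H :=
  let H0 := fresh in let H1 := fresh in let H2 := fresh in
  let H3 := fresh in let H4 := fresh in let H5 := fresh in
  pose proof (H E0) as H0; pose proof (H E1) as H1; pose proof (H E2) as H2;
  pose proof (H E3) as H3; pose proof (H E4) as H4; pose proof (H E5) as H5;
  simpl in H0, H1, H2, H3, H4, H5.

Lemma G2 y : inH y -> (exists e, Nrm e y = bnd e) -> (exists e, onE e y) \/ vertexH y.
Proof.
  destruct y as [y1 y2]. intros H [e He]. unfold_inH H.
  unfold vertexH, hV0, hV1, hV2, hV3, hV4, hV5.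
  destruct e; simpl in He;
  destruct (Req_dec y2 0), (Req_dec y2 1), (Req_dec y2 (-1)), (Req_dec y1 1), (Req_dec y1 (-1));
  first [ left; exists E0; simpl; lra | left; exists E1; simpl; lra | left; exists E2; simpl; lra
        | left; exists E3; simpl; lra | left; exists E4; simpl; lra | left; exists E5; simpl; lra
        | right; left; f_equal; lra | right; right; left; f_equal; lra
        | right; right; right; left; f_equal; lra | right; right; right; right; left; f_equal; lra
        | right; right; right; right; right; left; f_equal; lra
        | right; right; right; right; right; right; f_equal; lra ].
Qed.

Lemma G5 e y dm dk : onE e y -> inH (psub y (cen dm dk)) ->
  (dm = 0 /\ dk = 0)%Z \/ (dm = stm e /\ dk = stk e).
Proof.
  intros He Hi. pose proof (onE_inH e y He) as Hy.
  destruct y as [y1 y2]. unfold_inH Hy. unfold_inH Hi. unfold psub, cen in *; simpl in *.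
  assert (dm < 2)%Z by (apply lt_IZR; lra).
  assert (-2 < dm)%Z by (apply lt_IZR; lra).
  assert (dk < 2)%Z by (apply lt_IZR; lra).
  assert (-2 < dk)%Z by (apply lt_IZR; lra).
  assert (dm = -1 \/ dm = 0 \/ dm = 1)%Z as Hm by lia.
  assert (dk = -1 \/ dk = 0 \/ dk = 1)%Z as Hk by lia.
  destruct Hm as [->|[->| ->]], Hk as [->|[->| ->]]; destruct e; simpl in *;
  first [ left; split; reflexivity | right; split; reflexivity | exfalso; lra ].
Qed.

Lemma S1 L q : on_edge L q -> exists m k e, label e = L /\ onE e (psub (hat q) (cen m k)).
Proof.
  intros (m & k & P & Q & s & Hs & Hs01 & ->).
  rewrite !hat_padd, hat_pscale, hat_psub, hat_lat.
  destruct Hs as [[-> [-> ->]]|[[-> [-> ->]]|[[-> [-> ->]]|[[-> [-> ->]]|[[-> [-> ->]]|[-> [-> ->]]]]]]];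
  rewrite ?hat_V0, ?hat_V1, ?hat_V2, ?hat_V3, ?hat_V4, ?hat_V5; exists m, k;
  unfold psub, padd, pscale, cen, hV0, hV1, hV2, hV3, hV4, hV5; simpl;
  first [ exists E0; split; [reflexivity| simpl; lra] | exists E1; split; [reflexivity| simpl; lra]
        | exists E2; split; [reflexivity| simpl; lra] | exists E3; split; [reflexivity| simpl; lra]
        | exists E4; split; [reflexivity| simpl; lra] | exists E5; split; [reflexivity| simpl; lra] ].
Qed.

Lemma S2 e q m k : onE e (psub (hat q) (cen m k)) -> on_edge (label e) q.
Proof.
  intros H. destruct (hat q) as [h1 h2] eqn:Eh.
  unfold psub, cen in H; simpl in H.
  exists m, k.
  destruct e; simpl in H;
  [ exists V0, V1, (h2 - (IZR m + 2 * IZR k))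
  | exists V1, V2, ((1 - (h1 - 3 * IZR m))/2)
  | exists V2, V3, (1 - (h2 - (IZR m + 2 * IZR k)))
  | exists V3, V4, (- (h2 - (IZR m + 2 * IZR k)))
  | exists V4, V5, (((h1 - 3 * IZR m) + 1)/2)
  | exists V5, V0, ((h2 - (IZR m + 2 * IZR k)) + 1) ];
  (split; [unfold side; simpl; tauto|split; [lra|]]);
  apply hat_inj; rewrite !hat_padd, hat_pscale, hat_psub, hat_lat,
    ?hat_V0, ?hat_V1, ?hat_V2, ?hat_V3, ?hat_V4, ?hat_V5, Eh;
  unfold psub, padd, pscale, cen, hV0, hV1, hV2, hV3, hV4, hV5; simpl; f_equal; lra.
Qed.

Lemma S3 q m k : vertexH (psub (hat q) (cen m k)) -> tiling_vertex q.
Proof.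
  intros H. destruct (hat q) as [h1 h2] eqn:Eh. exists m, k.
  unfold vertexH, psub, cen, hV0, hV1, hV2, hV3, hV4, hV5 in H; simpl in H.
  destruct H as [H|[H|[H|[H|[H|H]]]]]; injection H; intros H2 H1;
  [exists V0|exists V1|exists V2|exists V3|exists V4|exists V5];
  (split; [unfold is_vertex_of_E; tauto|]);
  apply hat_inj; rewrite !hat_padd, hat_lat,
    ?hat_V0, ?hat_V1, ?hat_V2, ?hat_V3, ?hat_V4, ?hat_V5, Eh;
  unfold padd, cen, hV0, hV1, hV2, hV3, hV4, hV5; simpl; f_equal; lra.
Qed.

Lemma aff (l : list edge) (Af Bf : edge -> R) t0 t1 : t0 < t1 ->
  (forall e, In e l -> Af e + Bf e * t0 < 0 \/ (Af e + Bf e * t0 <= 0 /\ Bf e < 0)) ->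
  exists ts, t0 < ts <= t1 /\ (forall e, In e l -> Af e + Bf e * ts <= 0) /\
    (forall s, t0 < s < ts -> forall e, In e l -> Af e + Bf e * s < 0) /\
    (ts = t1 \/ exists e, In e l /\ Af e + Bf e * ts = 0).
Proof.
  intros Ht. induction l as [|a l IH]; intros H0.
  - exists t1; split; [lra|split; [intros e []|split; [intros s Hs e []|left; reflexivity]]].
  - destruct IH as [ts' [Hts' [Hle [Hlt Hdis]]]].
    { intros e He; apply H0; right; auto. }
    set (A := Af a) in *. set (Bb := Bf a) in *.
    assert (Ha : A + Bb * t0 < 0 \/ (A + Bb * t0 <= 0 /\ Bb < 0)) by (apply H0; left; auto).
    destruct (Rlt_dec (A + Bb * ts') 0) as [Hn|Hn].
    + exists ts'. split; [auto|split; [|split]].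
      * intros e [<-|He]; [fold A Bb; lra| auto].
      * intros s Hs e [<-|He]; [|auto]. fold A Bb.
        assert (E : (ts' - t0) * (A + Bb * s) = (ts' - s) * (A + Bb * t0) + (s - t0) * (A + Bb * ts')) by ring.
        destruct Ha as [Ha|[Ha Hb]].
        -- assert (0 < ts' - t0) by lra. nra.
        -- nra.
      * destruct Hdis as [->|[e [He1 He2]]]; [left; auto| right; exists e; split; [right|]; auto].
    + assert (HB : 0 < Bb /\ A + Bb * t0 < 0) by (destruct Ha as [Ha|[Ha Hb]]; nra).
      destruct HB as [HB Ha0].
      set (ts := - A / Bb).
      assert (Ets : Bb * ts = - A) by (unfold ts; field; lra).
      assert (t0 < ts) by (apply (Rmult_lt_reg_l Bb); lra).
      assert (ts <= ts') by (apply (Rmult_le_reg_l Bb); lra).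
      exists ts. split; [lra|split; [|split]].
      * intros e [<-|He]; [fold A Bb; lra|].
        destruct (Rle_lt_or_eq_dec ts ts' ltac:(lra)) as [Hl|Hl].
        -- apply Rlt_le, (Hlt ts); [lra|auto].
        -- rewrite Hl; auto.
      * intros s Hs e [<-|He]; [fold A Bb; nra|]. apply (Hlt s); [lra|auto].
      * right. exists a. split; [left; auto|fold A Bb; lra].
Qed.

Lemma psub_cen y a b c d : psub (psub y (cen a b)) (cen c d) = psub y (cen (a+c) (b+d)).
Proof. unfold psub, cen; simpl; rewrite !plus_IZR; f_equal; ring. Qed.

Lemma onE_opp e y : onE e y -> onE (opp e) (psub y (cen (stm e) (stk e))).
Proof. destruct y as [y1 y2]; destruct e; unfold psub, cen; simpl; intros; lra. Qed.

Lemma Nrm_opp e y : Nrm (opp e) y = - Nrm e y.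
Proof. destruct e; simpl; ring. Qed.
Lemma label_opp e : label (opp e) = label e.
Proof. destruct e; reflexivity. Qed.

Lemma Nrm_lin e P Vv c t : Nrm e (psub (padd P (pscale t Vv)) c) = Nrm e (psub P c) + Nrm e Vv * t.
Proof. destruct e; unfold psub, padd, pscale; simpl; ring. Qed.

Lemma hat_traj p v t : hat (traj p v t) = padd (hat p) (pscale t (hat v)).
Proof. unfold traj. rewrite hat_padd, hat_pscale. reflexivity. Qed.

Lemma par_vertex e y Vv : onE e y -> Nrm e Vv = 0 -> Vv <> (0,0) ->
  exists s, vertexH (padd y (pscale s Vv)).
Proof.
  destruct y as [y1 y2], Vv as [a b]. intros H HN HV.
  unfold vertexH, padd, pscale, hV0, hV1, hV2, hV3, hV4, hV5; simpl.
  assert (Hb : b <> 0 \/ a <> 0).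
  { destruct (Req_dec b 0); [right; intro; apply HV; subst; auto|left; auto]. }
  destruct e; simpl in H, HN.
  - assert (b <> 0) by (destruct Hb; auto; intro; apply H0; lra).
    assert (Es : (- y2 / b) * b = - y2) by (field; auto).
    exists (- y2 / b). left. assert (a = - b) by lra. subst a. f_equal; nra.
  - assert (a <> 0) by (destruct Hb; [subst; tauto|auto]).
    assert (Es : ((1 - y1) / a) * a = 1 - y1) by (field; auto).
    exists ((1 - y1) / a). right; left. subst b. f_equal; nra.
  - assert (b <> 0) by (destruct Hb; auto; intro; apply H0; lra).
    assert (Es : ((1 - y2) / b) * b = 1 - y2) by (field; auto).
    exists ((1 - y2) / b). right; right; left. assert (a = b) by lra. subst a. f_equal; nra.
  - assert (b <> 0) by (destruct Hb; auto; intro; apply H0; lra).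
    assert (Es : (- y2 / b) * b = - y2) by (field; auto).
    exists (- y2 / b). right; right; right; left. assert (a = - b) by lra. subst a. f_equal; nra.
  - assert (a <> 0) by (destruct Hb; [exfalso; apply H0; lra|auto]).
    assert (Es : ((-1 - y1) / a) * a = -1 - y1) by (field; auto).
    exists ((-1 - y1) / a). right; right; right; right; left. assert (b = 0) by lra. subst b. f_equal; nra.
  - assert (b <> 0) by (destruct Hb; auto; intro; apply H0; lra).
    assert (Es : ((-1 - y2) / b) * b = -1 - y2) by (field; auto).
    exists ((-1 - y2) / b). right; right; right; right; right. assert (a = b) by lra. subst a. f_equal; nra.
Qed.

Definition Yt p v t := padd (hat p) (pscale t (hat v)).

Lemma hatv_nz v : v <> (0,0) -> hat v <> (0,0).
Proof.
  destruct v as [a b]; unfold hat; simpl; intros H E; injection E; intros E2 E1; apply H.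
  pose proof hgt_pos. f_equal; [lra|].
  assert (b = (b / hgt) * hgt) by (field; lra). rewrite H1, E2. ring.
Qed.

Lemma stepA p v t L : linear_trajectory p v -> on_edge L (traj p v t) ->
  exists m k e, label e = L /\ 0 < Nrm e (hat v) /\ onE e (psub (Yt p v t) (cen m k)).
Proof.
  intros [Hv Hnv] Hon. destruct (S1 _ _ Hon) as (m & k & e & Hl & He).
  rewrite hat_traj in He. fold (Yt p v t) in He.
  destruct (Rtotal_order 0 (Nrm e (hat v))) as [Hp|[H0|Hn]].
  - exists m, k, e; auto.
  - exfalso. destruct (par_vertex e _ (hat v) He (eq_sym H0) (hatv_nz v Hv)) as [s Hs].
    apply (Hnv (t + s)). apply (S3 _ m k). rewrite hat_traj.
    replace (padd (hat p) (pscale (t + s) (hat v))) with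
      (padd (Yt p v t) (pscale s (hat v))).
    + destruct (Yt p v t), (hat v). unfold psub, padd, pscale, cen in *; simpl in *.
      replace (r + s * r1 - 3 * IZR m) with (r - 3 * IZR m + s * r1) by ring.
      replace (r0 + s * r2 - (IZR m + 2 * IZR k)) with (r0 - (IZR m + 2 * IZR k) + s * r2) by ring.
      exact Hs.
    + unfold Yt, padd, pscale; simpl; f_equal; ring.
  - exists (m + stm e)%Z, (k + stk e)%Z, (opp e). rewrite label_opp, Nrm_opp.
    split; [auto|split; [lra|]]. rewrite <- psub_cen. apply onE_opp; auto.
Qed.

Lemma tau_mono (tau : Z -> R) : (forall n, tau n < tau (n+1)%Z) ->
  forall a b, (a < b)%Z -> tau a < tau b.
Proof.
  intros H a b Hab.
  assert (forall d : nat, tau a < tau (a + Z.of_nat (Datatypes.S d))%Z).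
  { induction d.
    - simpl. apply H.
    - rewrite Nat2Z.inj_succ. replace (a + Z.succ (Z.of_nat (Datatypes.S d)))%Z
        with ((a + Z.of_nat (Datatypes.S d)) + 1)%Z by lia. specialize (H (a + Z.of_nat (Datatypes.S d))%Z). lra. }
  specialize (H0 (Z.to_nat (b - a - 1))).
  replace (a + Z.of_nat (Datatypes.S (Z.to_nat (b - a - 1))))%Z with b in H0 by lia. auto.
Qed.

Lemma stepC p v (tau : Z -> R) n m0 k0 e0 m1 k1 e1 :
  linear_trajectory p v -> (forall n, tau n < tau (n+1)%Z) ->
  (forall t L, on_edge L (traj p v t) -> exists n, tau n = t) ->
  0 < Nrm e0 (hat v) -> onE e0 (psub (Yt p v (tau n)) (cen m0 k0)) ->
  0 < Nrm e1 (hat v) -> onE e1 (psub (Yt p v (tau (n+1)%Z)) (cen m1 k1)) ->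
  m1 = (m0 + stm e0)%Z /\ k1 = (k0 + stk e0)%Z.
Proof.
  intros [Hv Hnv] Hmono Hall H0 He0 H1 He1.
  set (c1 := (m0 + stm e0)%Z). set (c2 := (k0 + stk e0)%Z).
  assert (Hy0 : onE (opp e0) (psub (Yt p v (tau n)) (cen c1 c2))).
  { unfold c1, c2. rewrite <- psub_cen. apply onE_opp; auto. }
  set (Af := fun e => Nrm e (psub (hat p) (cen c1 c2)) - bnd e).
  set (Bf := fun e => Nrm e (hat v)).
  assert (HAB : forall e t, Af e + Bf e * t = Nrm e (psub (Yt p v t) (cen c1 c2)) - bnd e).
  { intros e t. unfold Af, Bf, Yt. rewrite Nrm_lin. ring. }
  pose proof (Hmono n) as Htn.
  destruct (aff (E0 :: E1 :: E2 :: E3 :: E4 :: E5 :: nil) Af Bf (tau n) (tau (n+1)%Z) Htn)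
    as [ts [Hts [Hle [Hlt Hdis]]]].
  { intros e _. rewrite HAB. destruct (onE_tight _ _ Hy0) as [T1 T2].
    destruct (edge_eq_dec e (opp e0)) as [->|Hne].
    - right. split; [lra|]. unfold Bf. rewrite Nrm_opp. lra.
    - left. specialize (T2 e Hne). lra. }
  assert (HinH : inH (psub (Yt p v ts) (cen c1 c2))).
  { intros e. specialize (Hle e (all_edges e)). rewrite HAB in Hle. lra. }
  destruct Hdis as [Eq|[e [_ He]]].
  2: destruct (Req_dec ts (tau (n+1)%Z)) as [Eq|Hneq].
  3: { exfalso. rewrite HAB in He.
       assert (Ht : Nrm e (psub (Yt p v ts) (cen c1 c2)) = bnd e) by lra.
       destruct (G2 _ HinH (ex_intro _ e Ht)) as [[e' He']|Hvx].
       - assert (Hoe : on_edge (label e') (traj p v ts)).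
         { apply (S2 e' _ c1 c2). rewrite hat_traj. exact He'. }
         destruct (Hall _ _ Hoe) as [j Hj].
         destruct (Z_le_gt_dec j n).
         + destruct (Z.eq_dec j n); [subst; lra|].
           pose proof (tau_mono tau Hmono j n ltac:(lia)). lra.
         + destruct (Z.eq_dec j (n+1)); [subst; lra|].
           pose proof (tau_mono tau Hmono (n+1) j ltac:(lia)). lra.
       - apply (Hnv ts). apply (S3 _ c1 c2). rewrite hat_traj. exact Hvx. }
  all: rewrite Eq in HinH, Hlt.
  all: assert (Hd : psub (Yt p v (tau (n+1)%Z)) (cen c1 c2) =
         psub (psub (Yt p v (tau (n+1)%Z)) (cen m1 k1)) (cen (c1 - m1) (c2 - k1)))
       by (rewrite psub_cen; f_equal; f_equal; lia).
  all: rewrite Hd in HinH.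
  all: destruct (G5 _ _ _ _ He1 HinH) as [[Z1 Z2]|[Z1 Z2]]; [split; lia|exfalso].
  all: pose proof (onE_opp _ _ He1) as Hop; rewrite <- Z1, <- Z2, <- Hd in Hop.
  all: destruct (onE_tight _ _ Hop) as [T1 _].
  all: set (sm := (tau n + tau (n+1)%Z) / 2).
  all: assert (Hs := Hlt sm ltac:(unfold sm; lra) (opp e1) (all_edges _)).
  all: rewrite HAB in Hs.
  all: assert (Eaff := HAB (opp e1) (tau (n+1)%Z)).
  all: unfold Bf in Eaff; rewrite Nrm_opp in Eaff.
  all: assert (Eaff2 := HAB (opp e1) sm); unfold Bf in Eaff2; rewrite Nrm_opp in Eaff2.
  all: assert (sm < tau (n+1)%Z) by (unfold sm; lra).
  all: nra.
Qed.

Definition pv (j : nat) (a b : R) : R :=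
  match j with 0 => -2*b | 1 => a - b | 2 => a + b | 3 => 2*b | 4 => b - a | _ => -a - b end.

Lemma argmax (f : nat -> R) n : exists k, (k <= n)%nat /\ forall j, (j <= n)%nat -> f j <= f k.
Proof.
  induction n as [|n [k [Hk IH]]].
  - exists 0%nat; split; [lia|intros j Hj; assert (j = 0)%nat by lia; subst; lra].
  - destruct (Rle_dec (f (Datatypes.S n)) (f k)).
    + exists k; split; [lia|]. intros j Hj. destruct (Nat.eq_dec j (Datatypes.S n)); [subst; auto|apply IH; lia].
    + exists (Datatypes.S n); split; [lia|]. intros j Hj. destruct (Nat.eq_dec j (Datatypes.S n)); [subst; lra|].
      specialize (IH j ltac:(lia)). lra.
Qed.

Definition secE (k : nat) : edge * edge * edge :=
  match k with 0 => (E3, E4, E5) | 1 => (E4, E5, E0) | 2 => (E5, E0, E1)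
  | 3 => (E0, E1, E2) | 4 => (E1, E2, E3) | _ => (E2, E3, E4) end.
Definition sal k a b := pv ((k+4) mod 6) a b - pv ((k+3) mod 6) a b.
Definition sga k a b := pv k a b - pv ((k+5) mod 6) a b.
Definition sbase k a b := pv ((k+3) mod 6) a b.
Definition posof k (e : edge) : pos :=
  let '(e1, e2, e3) := secE k in
  if edge_eq_dec e e1 then P1 else if edge_eq_dec e e2 then P2 else P3.
Definition fk k (p : pos) : letter :=
  let '(e1, e2, e3) := secE k in
  match p with P1 => label e1 | P2 => label e2 | P3 => label e3 end.
Definition psi (V y : pt) : R := fst V * snd y - snd V * fst y.

Lemma SecLem k a b e y : (k <= 5)%nat -> (forall j, (j <= 5)%nat -> pv j a b <= pv k a b) ->
  0 < Nrm e (a, b) -> onE e y ->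
  clause (sal k a b) (sga k a b) (posof k e) (psi (a,b) y - sbase k a b)
     (psi (a,b) y - sbase k a b - psi (a,b) (cen (stm e) (stk e))) /\
  label e = fk k (posof k e).
Proof.
  intros Hk Hs HN He.
  pose proof (Hs 0%nat ltac:(lia)) as S0; pose proof (Hs 1%nat ltac:(lia)) as S1';
  pose proof (Hs 2%nat ltac:(lia)) as S2'; pose proof (Hs 3%nat ltac:(lia)) as S3';
  pose proof (Hs 4%nat ltac:(lia)) as S4; pose proof (Hs 5%nat ltac:(lia)) as S5.
  destruct y as [y1 y2].
  assert (k = 0 \/ k = 1 \/ k = 2 \/ k = 3 \/ k = 4 \/ k = 5)%nat as Hk6 by lia.
  destruct Hk6 as [->|[->|[->|[->|[->| ->]]]]];
  destruct e; simpl in HN, He, S0, S1', S2', S3', S4, S5 |- *;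
  try (exfalso; lra);
  (split; [|reflexivity]);
  unfold psi, cen, sal, sga, sbase; simpl;
  first [ assert (y1 = 2 - y2) as -> by lra | assert (y2 = 1) as -> by lra
        | assert (y1 = y2 - 2) as -> by lra | assert (y1 = -2 - y2) as -> by lra
        | assert (y2 = -1) as -> by lra | assert (y1 = 2 + y2) as -> by lra ];
  (split; [split; nra| lra]).
Qed.

Lemma psi_next p v t t' m k s u :
  psi (hat v) (psub (Yt p v t') (cen (m + s) (k + u))) =
  psi (hat v) (psub (Yt p v t) (cen m k)) - psi (hat v) (cen s u).
Proof.
  unfold psi, Yt, psub, padd, pscale, cen; simpl. rewrite !plus_IZR. ring.
Qed.

Theorem geo_K p v w : linear_trajectory p v -> cutting_sequence p v w -> Kw w.
Proof.
  intros Hlt (tau & Hmono & Hon & Hall).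
  assert (HA : forall n, exists r : (Z * Z) * edge, label (snd r) = w n /\ 0 < Nrm (snd r) (hat v) /\
    onE (snd r) (psub (Yt p v (tau n)) (cen (fst (fst r)) (snd (fst r))))).
  { intro n; destruct (stepA p v (tau n) (w n) Hlt (Hon n)) as (m & k & e & H1 & H2 & H3).
    exists ((m, k), e); simpl; auto. }
  destruct (functional_choice _ HA) as [F HF].
  set (cm := fun n => fst (fst (F n))). set (ck := fun n => snd (fst (F n))).
  set (ed := fun n => snd (F n)).
  assert (HC : forall n, cm (n+1)%Z = (cm n + stm (ed n))%Z /\ ck (n+1)%Z = (ck n + stk (ed n))%Z).
  { intro n. destruct (HF n) as [_ [A2 A3]]. destruct (HF (n+1)%Z) as [_ [B2 B3]].
    apply (stepC p v tau n _ _ _ _ _ (snd (F (n+1)%Z)) Hlt Hmono Hall A2 A3 B2 B3). }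
  set (a := fst (hat v)). set (b := snd (hat v)).
  assert (Ehv : hat v = (a, b)) by (unfold a, b; destruct (hat v); reflexivity).
  destruct (argmax (fun j => pv j a b) 5) as [k [Hk Hmax]].
  exists (fk k), (sal k a b), (sga k a b), (fun n => posof k (ed n)),
    (fun n => psi (a,b) (psub (Yt p v (tau n)) (cen (cm n) (ck n))) - sbase k a b).
  split; [|split].
  - pose proof (Hmax 0%nat ltac:(lia)).
    assert (k = 0 \/ k = 1 \/ k = 2 \/ k = 3 \/ k = 4 \/ k = 5)%nat as Hk6 by lia.
    intros x y; destruct Hk6 as [->|[->|[->|[->|[->| ->]]]]]; destruct x, y; simpl;
    first [reflexivity | discriminate].
  - pose proof (Hmax 0%nat ltac:(lia)) as S0; pose proof (Hmax 1%nat ltac:(lia)) as S1';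
    pose proof (Hmax 2%nat ltac:(lia)) as S2'; pose proof (Hmax 3%nat ltac:(lia)) as S3';
    pose proof (Hmax 4%nat ltac:(lia)) as S4; pose proof (Hmax 5%nat ltac:(lia)) as S5.
    split; [|split].
    + assert (k = 0 \/ k = 1 \/ k = 2 \/ k = 3 \/ k = 4 \/ k = 5)%nat as Hk6 by lia.
      unfold sal; destruct Hk6 as [->|[->|[->|[->|[->| ->]]]]]; simpl in *; lra.
    + assert (k = 0 \/ k = 1 \/ k = 2 \/ k = 3 \/ k = 4 \/ k = 5)%nat as Hk6 by lia.
      unfold sga; destruct Hk6 as [->|[->|[->|[->|[->| ->]]]]]; simpl in *; lra.
    + intros n. destruct (HF n) as [A1 [A2 A3]].
      rewrite Ehv in A2.
      destruct (SecLem k a b (ed n) _ Hk Hmax A2 A3) as [Hcl _].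
      destruct (HC n) as [-> ->].
      rewrite <- Ehv. rewrite (psi_next p v (tau n) (tau (n+1)%Z)). rewrite <- Ehv in Hcl.
      match goal with |- clause _ _ _ ?x ?y =>
        replace y with (x - psi (hat v) (cen (stm (ed n)) (stk (ed n)))) by ring end.
      exact Hcl.
  - intros n. destruct (HF n) as [A1 [A2 A3]]. rewrite Ehv in A2.
    destruct (SecLem k a b (ed n) _ Hk Hmax A2 A3) as [_ Hl].
    rewrite <- A1. exact Hl.
Qed.


Theorem mainTheorem6 : forall (p v : pt) (w : word),
  linear_trajectory p v -> cutting_sequence p v w -> infinitely_derivable w.
Proof.
  intros p v w H1 H2. apply Kw_inf. exact (geo_K p v w H1 H2).
Qed.
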